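(* The group of units $U(\Pi_2)$ of $\Pi_2=\langle a,b,c\mid (ab^ic)^2=1\ (i\geq 1)\rangle$ is isomorphic to the free product of countably infinitely many cyclic groups of order $2$, i.e. to the group $\langle x_i\ (i\geq 1)\mid x_i^2=1\ (i\geq1)\rangle$, via $ab^ic\mapsto x_i$. In particular, $U(\Pi_2)$ is not finitely generated.
   Context: The group of units $U(M)$ of a monoid $M$ is the set of elements having both a left and a right inverse. *)

(* Defs.v *)
From Stdlib Require Import Relations List.
From mathcomp Require Import all_boot.
Set Implicit Arguments. Unset Strict Implicit. Unset Printing Implicit Defensive.

(** A monoid presentation <A | l_j = r_j> is encoded by a relation
    [R : list A -> list A -> Prop] (R l r means "l = r" is a defining relation). *)
Definition pres_step (A : Type) (R : list A -> list A -> Prop) (u v : list A) : Prop :=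
  exists x y l r, R l r /\ u = x ++ l ++ y /\ v = x ++ r ++ y.

(** The congruence generated by R: the elements of the presented monoid are the
    classes of words for this equivalence; multiplication is concatenation. *)
Definition pres_eq (A : Type) (R : list A -> list A -> Prop) : relation (list A) :=
  clos_refl_sym_trans (list A) (pres_step R).

Definition pres_unit (A : Type) (R : list A -> list A -> Prop) (u : list A) : Prop :=
  (exists v, pres_eq R (v ++ u) [::]) /\ (exists v, pres_eq R (u ++ v) [::]).

(** u lies in the subgroup of U(M) generated by the (units represented by) S:
    u is equal in M to a product of elements each equal to an element of S or
    to an inverse of an element of S. *)
Definition pres_gen_by (A : Type) (R : list A -> list A -> Prop)
    (S : list (list A)) (u : list A) : Prop :=
  exists l : list (list A),
    (forall v, List.In v l -> exists s, List.In s S /\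
        (pres_eq R v s \/ (pres_eq R (v ++ s) [::] /\ pres_eq R (s ++ v) [::]))) /\
    pres_eq R (flatten l) u.

Inductive abc := La | Lb | Lc.

Definition abic (i : nat) : list abc := La :: nseq i Lb ++ [:: Lc].

Definition Pi2_rel (l r : list abc) : Prop :=
  exists i, 1 <= i /\ l = abic i ++ abic i /\ r = [::].

Definition Pi2_eq := pres_eq Pi2_rel.
Definition Pi2_unit := pres_unit Pi2_rel.

(** Letter [k : nat] stands
    for the generator x_(k+1).  As every generator is its own inverse, the
    monoid presentation below presents exactly this group. *)
Definition Z2free_rel (l r : list nat) : Prop :=
  exists k, l = [:: k; k] /\ r = [::].

Definition Z2free_eq := pres_eq Z2free_rel.

Definition phi (w : list nat) : list abc := flatten (map (fun k => abic k.+1) w).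

(* Main.v *)
Require Import Defs.
From Stdlib Require Import List Relations.
From mathcomp Require Import all_boot zify.
Set Implicit Arguments. Unset Strict Implicit. Unset Printing Implicit Defensive.

Lemma pe_refl A (R : list A -> list A -> Prop) u : pres_eq R u u.
Proof. exact: rst_refl. Qed.
Lemma pe_sym A (R : list A -> list A -> Prop) u v : pres_eq R u v -> pres_eq R v u.
Proof. exact: rst_sym. Qed.
Lemma pe_trans A (R : list A -> list A -> Prop) u v w :
  pres_eq R u v -> pres_eq R v w -> pres_eq R u w.
Proof. exact: rst_trans. Qed.
Lemma pe_step A (R : list A -> list A -> Prop) x l r y :
  R l r -> pres_eq R (x ++ l ++ y) (x ++ r ++ y).
Proof. move=> H; apply: rst_step; by exists x, y, l, r. Qed.
Lemma pe_ctx A (R : list A -> list A -> Prop) x y u v :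
  pres_eq R u v -> pres_eq R (x ++ u ++ y) (x ++ v ++ y).
Proof.
elim=> {u v} [u v [p [q [l [r [Hr [-> ->]]]]]]| u | u v _ IH | u v w _ IH1 _ IH2].
- have := pe_step (x ++ p) (q ++ y) Hr; by rewrite !catA.
- exact: pe_refl.
- exact: pe_sym.
- exact: pe_trans IH2.
Qed.
Lemma pe_cat2 A (R : list A -> list A -> Prop) u u' v v' :
  pres_eq R u u' -> pres_eq R v v' -> pres_eq R (u ++ v) (u' ++ v').
Proof.
move=> H1 H2; apply: (pe_trans (v := u' ++ v)).
- exact: (pe_ctx [::] v H1).
- have := pe_ctx u' [::] H2; by rewrite !cats0.
Qed.
Lemma unit_eq A (R : list A -> list A -> Prop) u u' :
  pres_eq R u u' -> pres_unit R u -> pres_unit R u'.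
Proof.
move=> H [[v Hv] [v' Hv']]; split.
- exists v; apply: pe_trans Hv; apply: pe_cat2 (pe_refl _ _) (pe_sym H).
- exists v'; apply: pe_trans Hv'; apply: pe_cat2 (pe_sym H) (pe_refl _ _).
Qed.
Lemma unit_cat A (R : list A -> list A -> Prop) u v :
  pres_unit R u -> pres_unit R v -> pres_unit R (u ++ v).
Proof.
move=> [[u1 Hu1] [u2 Hu2]] [[v1 Hv1] [v2 Hv2]]; split.
- exists (v1 ++ u1).
  have -> : (v1 ++ u1) ++ u ++ v = v1 ++ (u1 ++ u) ++ v by rewrite !catA.
  apply: pe_trans Hv1; have := pe_ctx v1 v Hu1; by rewrite /=.
- exists (v2 ++ u2).
  have -> : (u ++ v) ++ v2 ++ u2 = u ++ (v ++ v2) ++ u2 by rewrite !catA.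
  apply: pe_trans Hu2; have := pe_ctx u u2 Hv2; by rewrite /=.
Qed.
Lemma cat_eq_cat T (l1 l2 l3 l4 : list T) : l1 ++ l2 = l3 ++ l4 ->
  exists m, (l1 = l3 ++ m /\ l4 = m ++ l2) \/ (l3 = l1 ++ m /\ l2 = m ++ l4).
Proof.
elim: l1 l3 => [|x l1 IH] [|y l3] /=.
- move=> ->; exists [::]; by left.
- move=> H; exists (y :: l3); by right.
- move=> H; exists (x :: l1); by left.
- case=> -> /IH [m [[-> ->]|[-> ->]]]; exists m; [left|right]; done.
Qed.

Fixpoint splitb (t : list abc) : nat * list abc :=
  match t with Lb :: t' => ((splitb t').1.+1, (splitb t').2) | _ => (0, t) end.

Definition notb (t : list abc) := match t with Lb :: _ => false | _ => true end.

Lemma splitbP t : t = nseq (splitb t).1 Lb ++ (splitb t).2 /\ notb (splitb t).2.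
Proof.
elim: t => [|x t [E1 E2]] //=; case: x => //=; split=> //; congr (_ :: _); exact: E1.
Qed.

Lemma splitb_nseq i t : notb t -> splitb (nseq i Lb ++ t) = (i, t).
Proof.
move=> H; elim: i => [|i IH] /=; last by rewrite IH.
by case: t H => [|[] t] //.
Qed.

Definition red (w : list abc) : option (list abc) :=
  match w with
  | La :: t =>
     if (splitb t).1 == 0 then None else
     match (splitb t).2 with
     | Lc :: La :: t2 =>
        if (splitb t).1 == (splitb t2).1 then
          (match (splitb t2).2 with Lc :: t4 => Some t4 | _ => None end)
        else None
     | _ => None
     end
  | _ => None
  end.

Lemma abic2E i r : abic i ++ abic i ++ r =
  La :: nseq i Lb ++ Lc :: La :: nseq i Lb ++ Lc :: r.
Proof. by rewrite /abic /= -!catA. Qed.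

Lemma red_complete i r : 1 <= i -> red (abic i ++ abic i ++ r) = Some r.
Proof.
move=> Hi; rewrite abic2E /= splitb_nseq //= splitb_nseq //= eqxx.
by case: i Hi.
Qed.

Lemma red_sound w r : red w = Some r -> exists i, 1 <= i /\ w = abic i ++ abic i ++ r.
Proof.
case: w => [|[] t] //=.
case: (splitbP t) => Et Nt.
case: ((splitb t).1 =P 0) => // Hi.
case E2: (splitb t).2 Nt Et => [|[] [|[] t2]] //= _ Et.
case: (splitbP t2) => Et2 Nt2.
case: eqP => // Eij.
case E4: (splitb t2).2 Nt2 Et2 => [|[] t4] //= _ Et2 [<-].
exists (splitb t).1; split; first by case: ((splitb t).1) Hi.
rewrite -!catA /=; congr (_ :: _); by rewrite {1}Et {1}Et2 -Eij.
Qed.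

Lemma abic_prefix i j X Y : abic i ++ X = abic j ++ Y -> i = j /\ X = Y.
Proof.
rewrite /abic /= => [[]]; rewrite -!catA /=.
elim: i j => [|i IH] [|j] //=; first by case.
by case=> /IH [-> ->].
Qed.

Definition push (x : abc) (st : list abc) :=
  if red (x :: st) is Some t then t else x :: st.

Definition nf (w : list abc) := foldr push [::] w.

Definition reduced (st : list abc) :=
  forall p q i, 1 <= i -> st <> p ++ abic i ++ abic i ++ q.

Lemma reduced_suffix p t : reduced (p ++ t) -> reduced t.
Proof. move=> H p' q i Hi E; apply: (H (p ++ p') q i Hi); by rewrite E catA. Qed.

Lemma reduced_nil : reduced [::].
Proof. by move=> [|? ?] q i Hi. Qed.

Lemma push_reduced x st : reduced st -> reduced (push x st).
Proof.
rewrite /push; case E: (red _) => [t|] Hst.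
- case: (red_sound E) => i [Hi Ex].
  move: Ex; rewrite abic2E; case=> _ Est.
  move: Hst; rewrite Est -cat_cons.
  have -> : Lc :: La :: nseq i Lb ++ Lc :: t = (Lc :: abic i) ++ t.
    by rewrite /abic /= -catA.
  rewrite catA; exact: reduced_suffix.
- move=> [|y p] q i Hi /=.
  + move=> Ex; by rewrite Ex red_complete in E.
  + case=> _ Est; exact: (Hst p q i Hi Est).
Qed.

Lemma push_nonA x st : x <> La -> push x st = x :: st.
Proof. by case: x. Qed.

Lemma foldr_push_abic i st : foldr push st (abic i) =
  if red (abic i ++ st) is Some t then t else abic i ++ st.
Proof.
have H1 : foldr push st (nseq i Lb ++ [:: Lc]) = nseq i Lb ++ Lc :: st.
  rewrite foldr_cat; elim: i => [|i IH]; first by rewrite /= push_nonA.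
  by rewrite [LHS]/= IH push_nonA.
change (foldr push st (abic i)) with (push La (foldr push st (nseq i Lb ++ [:: Lc]))).
by rewrite H1 /push /abic /= -catA.
Qed.

Lemma push_fix st i : 1 <= i -> reduced st -> foldr push st (abic i ++ abic i) = st.
Proof.
move=> Hi Hst; rewrite foldr_cat (foldr_push_abic i st).
case E: (red _) => [t|].
- case: (red_sound E) => j [Hj] /abic_prefix [<- Est].
  rewrite foldr_push_abic; case E2: (red _) => [t'|] //.
  case: (red_sound E2) => k [Hk] /abic_prefix [<- Et].
  by case: (Hst [::] t' i Hi); rewrite Est Et.
- by rewrite foldr_push_abic red_complete.
Qed.

Lemma nf_cat u v : nf (u ++ v) = foldr push (nf v) u.
Proof. by rewrite /nf foldr_cat. Qed.

Lemma nf_reduced w : reduced (nf w).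
Proof. elim: w => [|x w IH] /=; [exact: reduced_nil | exact: push_reduced]. Qed.

Lemma nf_step u v : pres_step Pi2_rel u v -> nf u = nf v.
Proof.
case=> x [y [l [r [[i [Hi [-> ->]]] [-> ->]]]]].
rewrite !nf_cat push_fix //; exact: nf_reduced.
Qed.

Lemma nf_eq u v : Pi2_eq u v -> nf u = nf v.
Proof.
elim=> {u v} [u v /nf_step|u|u v _ IH|u v w _ IH1 _ IH2] //.
by rewrite IH1.
Qed.

Lemma push_eq x st : Pi2_eq (x :: st) (push x st).
Proof.
rewrite /push; case E: (red _) => [t|]; last exact: pe_refl.
case: (red_sound E) => i [Hi Ex]; rewrite Ex.
have H : Pi2_rel (abic i ++ abic i) [::] by exists i.
have := (@pe_step _ Pi2_rel [::] _ [::] t H); by rewrite /= -catA.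
Qed.

Lemma nf_eqw w : Pi2_eq w (nf w).
Proof.
elim: w => [|x w IH] /=; first exact: pe_refl.
apply: pe_trans (push_eq _ _).
have := (@pe_ctx _ Pi2_rel [:: x] [::] _ _ IH); by rewrite !cats0.
Qed.

Lemma Pi2_eq_iff u v : Pi2_eq u v <-> nf u = nf v.
Proof.
split; first exact: nf_eq.
move=> E; apply: pe_trans (nf_eqw u) _; rewrite E; exact: pe_sym (nf_eqw v).
Qed.

Lemma nf_id r : reduced r -> nf r = r.
Proof.
elim: r => [|x r IH] Hr //=.
rewrite IH; last by apply: (@reduced_suffix [:: x]).
rewrite /push; case E: (red _) => [t|] //.
case: (red_sound E) => i [Hi Ex]; by case: (Hr [::] t i Hi).
Qed.

Definition pairok (x y : abc) : bool :=
  match x, y with La, Lb => true | La, _ => false | Lb, La => false | _, _ => true end.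
Definition isc (x : abc) := if x is Lc then true else false.
Fixpoint bg (w : list abc) : bool :=
  match w with
  | x :: t => (if t is y :: _ then pairok x y else true) && bg t
  | [::] => true
  end.
Definition G w := bg w && isc (last Lc w).

Lemma bg_suffix p t : bg (p ++ t) -> bg t.
Proof. elim: p => [|x p IH] //= /andP [_]; exact: IH. Qed.

Lemma G_suffix p t : G (p ++ t) -> G t.
Proof.
rewrite /G last_cat => /andP [/bg_suffix -> ].
by case: t => [|y t].
Qed.

Lemma bg_cat k t : bg k -> bg t -> isc (last Lc k) -> bg (k ++ t).
Proof.
elim: k => [|x k IH] //= /andP [H1 H2] Ht Hl.
case: k IH H1 H2 Hl => [|y k] IH H1 H2 Hl /=.
- rewrite Ht andbT; clear IH; case: t Ht => // z t _; by case: x Hl.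
- rewrite H1 /=; exact: IH.
Qed.

Lemma G_cat k t : G k -> G t -> G (k ++ t).
Proof.
rewrite /G => /andP [Hk Hlk] /andP [Ht Hlt].
rewrite bg_cat // last_cat.
by case: (last Lc k) Hlk.
Qed.

Lemma G_abic i : 1 <= i -> G (abic i).
Proof.
case: i => // i _; rewrite /G /abic /=.
elim: i => [|i /andP [IH1 IH2]] //=.
Qed.

Lemma G_inv q v : foldr push q v = [::] -> G q.
Proof.
have : exists p k t, foldr push q v = p ++ t /\ q = k ++ t /\ G k.
  elim: v => [|x v [p [k [t [E1 [E2 Gk]]]]]].
  - by exists [::], [::], q.
  - rewrite /= E1 /push; case E: (red _) => [t'|].
    + case: (red_sound E) => i [Hi Ex].
      move: Ex; rewrite -cat_cons catA => /cat_eq_cat [m [[Ep Et]|[Ep Et]]].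
      * exists m, k, t; split=> //.
      * exists [::], (k ++ m), t'; split=> //; split; first by rewrite -catA -Et.
        apply: G_cat => //; apply: (@G_suffix (x :: p)).
        rewrite -Ep; apply: G_cat; exact: G_abic.
    + by exists (x :: p), k, t.
move=> [p [k [t [E1 [E2 Gk]]]]] E.
rewrite E in E1; case: p E1 => [|? ?] // E1.
move: E1 => /= E1; by rewrite E2 -E1 cats0.
Qed.

Lemma head_a r v : Pi2_eq (r ++ v) [::] -> r <> [::] -> exists r', r = La :: r'.
Proof.
move/nf_eq; rewrite nf_cat.
case: r => [|x r] // /= + _.
rewrite /push; case E: (red _) => [t|] // _.
case: (red_sound E) => i [_]; rewrite /abic /=; case=> -> _; by exists r.
Qed.

Lemma G_nseq n t : G (Lb :: nseq n Lb ++ t) -> G (Lb :: t).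
Proof.
elim: n => [|n IH] H; first exact: H.
apply: IH; move: H; by rewrite /G /=.
Qed.

Lemma peel r t : G r -> r = La :: t -> exists j t', 1 <= j /\ r = abic j ++ t'.
Proof.
move=> Gr Er; case: (splitbP t) => Et Nt.
move: Gr; rewrite Er Et.
case Ej: (splitb t).1 => [|j].
- case: (splitb t).2 Nt => [|[] t1] //=.
- move=> Gr; have := G_suffix (p := [:: La]) Gr => /= /G_nseq.
  case E2: (splitb t).2 Nt => [|[] t1] //= _ _.
  exists j.+1, t1; split=> //.
  by rewrite /abic /= -catA.
Qed.

Lemma phi_cat x y : phi (x ++ y) = phi x ++ phi y.
Proof. by rewrite /phi map_cat flatten_cat. Qed.

Lemma phi_cons k w : phi (k :: w) = abic k.+1 ++ phi w.
Proof. by []. Qed.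

Lemma abic2_eq i t : 1 <= i -> Pi2_eq (abic i ++ abic i ++ t) t.
Proof.
move=> Hi; have H : Pi2_rel (abic i ++ abic i) [::] by exists i.
have := (@pe_step _ Pi2_rel [::] _ [::] t H); by rewrite /= -catA.
Qed.

Lemma abic_unit i : 1 <= i -> Pi2_unit (abic i).
Proof.
move=> Hi; split; exists (abic i);
  (have := abic2_eq [::] Hi; by rewrite cats0).
Qed.

Lemma unit_phi n : forall r, size r <= n -> reduced r -> Pi2_unit r ->
  exists w, r = phi w.
Proof.
elim: n => [|n IH] r.
- by case: r => // _ _ _; exists [::].
case: r => [|x r0] Hs Hr Hu; first by exists [::].
set r := x :: r0 in Hs Hr Hu *.
case: (Hu) => [[v Hv] [v' Hv']].
case: (head_a Hv') => // t Et.
have Gr : G r.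
  apply: (@G_inv r v); move/nf_eq: Hv; by rewrite nf_cat nf_id.
case: (peel Gr Et) => j [t' [Hj Er]].
have Hr' : reduced t' by apply: (@reduced_suffix (abic j)); rewrite -Er.
have Hu' : Pi2_unit t'.
  apply: (@unit_eq _ _ (abic j ++ r)); first by rewrite Er; exact: abic2_eq.
  apply: unit_cat => //; exact: abic_unit.
have Hs' : size t' <= n.
  move: Hs; rewrite -/r Er size_cat /abic /= size_cat /=; lia.
case: (IH t' Hs' Hr' Hu') => w Ew.
exists (j.-1 :: w); rewrite -/r Er phi_cons Ew prednK //.
Qed.

Lemma part3 u : Pi2_unit u -> exists w, Pi2_eq u (phi w).
Proof.
move=> Hu.
have Hn : Pi2_unit (nf u) by apply: unit_eq Hu; exact: nf_eqw.
case: (@unit_phi (size (nf u)) (nf u) (leqnn _) (@nf_reduced u) Hn) => w Ew.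
exists w; rewrite -Ew; exact: nf_eqw.
Qed.

Definition fpush (k : nat) (st : list nat) :=
  match st with k' :: st' => if k == k' then st' else k :: st | [::] => [:: k] end.
Definition fred (w : list nat) := foldr fpush [::] w.

Lemma Z2_fred w : Z2free_eq w (fred w).
Proof.
elim: w => [|k w IH] /=; first exact: pe_refl.
apply: (@pe_trans _ _ _ (k :: fred w)).
  have := (@pe_ctx _ Z2free_rel [:: k] [::] _ _ IH); by rewrite !cats0.
case: (fred w) => [|k' s] /=; first exact: pe_refl.
case: eqP => [<-|_]; last exact: pe_refl.
have H : Z2free_rel [:: k; k] [::] by exists k.
exact: (@pe_step _ Z2free_rel [::] _ [::] s H).
Qed.

Lemma nf_phi w : nf (phi w) = phi (fred w).
Proof.
elim: w => [|k w IH] //.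
rewrite phi_cons nf_cat IH foldr_push_abic.
change (fred (k :: w)) with (fpush k (fred w)).
case: (fred w) => [|k' s].
- case E: (red _) => [t|] //.
  case: (red_sound E) => i [_ /abic_prefix [_]]; by case: i.
- rewrite phi_cons; rewrite [fpush _ _]/=; case: eqP => [<-|Hk].
  + by rewrite red_complete.
  + case E: (red _) => [t|] //.
    case: (red_sound E) => i [_ /abic_prefix [<-] /abic_prefix [[]]].
    by move=> /esym.
Qed.

Lemma phi_inj w w' : phi w = phi w' -> w = w'.
Proof.
elim: w w' => [|k w IH] [|k' w'] //.
rewrite !phi_cons => /abic_prefix [[->] /IH ->] //.
Qed.

Lemma Z2_to_Pi2 w w' : Z2free_eq w w' -> Pi2_eq (phi w) (phi w').
Proof.
elim=> {w w'} [w w' [x [y [l [r [[k [-> ->]] [-> ->]]]]]]| u | u v _ IH | u v w _ IH1 _ IH2].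
- rewrite !phi_cat; have := @abic2_eq k.+1 (phi y) (ltn0Sn _).
  move/(@pe_ctx _ _ (phi x) [::]); rewrite !cats0.
  have -> : phi [:: k; k] = abic k.+1 ++ abic k.+1 by rewrite /phi /= cats0.
  change (phi [::] ++ phi y) with (phi y); by rewrite -catA.
- exact: pe_refl.
- exact: pe_sym.
- exact: pe_trans IH2.
Qed.

Lemma part1 w w' : Z2free_eq w w' <-> Pi2_eq (phi w) (phi w').
Proof.
split; first exact: Z2_to_Pi2.
move/nf_eq; rewrite !nf_phi => /phi_inj E.
apply: pe_trans (Z2_fred w) _; rewrite E; exact: pe_sym (Z2_fred w').
Qed.

Lemma Z2_rev w : Z2free_eq (rev w ++ w) [::] /\ Z2free_eq (w ++ rev w) [::].
Proof.
elim: w => [|k w [IH1 IH2]]; first by split; exact: pe_refl.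
have H : Z2free_rel [:: k; k] [::] by exists k.
rewrite rev_cons -cats1; split.
- apply: pe_trans IH1.
  have := (@pe_step _ Z2free_rel (rev w) _ _ w H); by rewrite /= -catA.
- have E : (k :: w) ++ rev w ++ [:: k] = [:: k] ++ (w ++ rev w) ++ [:: k] by rewrite catA.
  rewrite E; apply: pe_trans (@pe_ctx _ _ [:: k] [:: k] _ _ IH2) _.
  have := (@pe_step _ Z2free_rel [::] _ _ [::] H); by rewrite /=.
Qed.

Lemma part2 w : Pi2_unit (phi w).
Proof.
case: (Z2_rev w) => H1 H2; split; exists (phi (rev w)); rewrite -phi_cat.
- exact: (Z2_to_Pi2 H1).
- exact: (Z2_to_Pi2 H2).
Qed.

Lemma parity N w w' : Z2free_eq w w' -> odd (count_mem N w) = odd (count_mem N w').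
Proof.
elim=> {w w'} [w w' [x [y [l [r [[k [-> ->]] [-> ->]]]]]]| u | u v _ IH | u v w _ IH1 _ IH2] //.
- rewrite !count_cat /=; case: (k == N) => /=; rewrite ?addn0 ?add0n //.
  have -> : forall a b, a + (1 + 1 + b) = (a + b) + 2 by move=> a b; lia.
  by rewrite oddD /= addbF.
- by rewrite IH1.
Qed.

Lemma bound_word (w : list nat) : exists N, all (fun k => k < N) w.
Proof.
elim: w => [|k w [N HN]]; first by exists 0.
exists (maxn N k.+1) => /=; apply/andP; split; first by rewrite leq_max leqnn orbT.
apply: sub_all HN => j /= Hj; rewrite leq_max Hj //.
Qed.

Lemma gen_bound (S : list (list abc)) : (forall s, List.In s S -> Pi2_unit s) ->
  exists N, forall s, List.In s S -> exists w, Pi2_eq s (phi w) /\ all (fun k => k < N) w.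
Proof.
elim: S => [|s S IH] HS; first by exists 0.
case: IH => [s' Hs'|N HN]; first by apply: HS; right.
case: (part3 (HS s (or_introl erefl))) => w Hw.
case: (bound_word w) => M HM.
exists (maxn N M) => s' [<-|Hs'].
- exists w; split=> //; apply: sub_all HM => j /= Hj; rewrite leq_max Hj orbT //.
- case: (HN s' Hs') => w' [H1 H2]; exists w'; split=> //.
  apply: sub_all H2 => j /= Hj; rewrite leq_max Hj //.
Qed.

Lemma part4 : ~ (exists S : list (list abc),
        (forall s, List.In s S -> Pi2_unit s) /\
        (forall u, Pi2_unit u -> pres_gen_by Pi2_rel S u)).
Proof.
case=> S [HS Hgen].
case: (gen_bound HS) => N HN.
case: (Hgen _ (part2 [:: N])) => l [Hl Hfl].
have : exists W, all (fun k => k < N) W /\ Pi2_eq (flatten l) (phi W).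
  elim: l Hl {Hfl} => [|v l IH] Hl; first by exists [::]; split=> //; exact: pe_refl.
  case: IH => [v' Hv'|W [HW1 HW2]]; first by apply: Hl; right.
  have [Wv [HWv1 HWv2]] : exists Wv, all (fun k => k < N) Wv /\ Pi2_eq v (phi Wv).
    case: (Hl v (or_introl erefl)) => s [Hs [Hvs|[Hvs1 Hvs2]]];
      case: (HN s Hs) => ws [Hws1 Hws2].
    - exists ws; split=> //; exact: pe_trans Hws1.
    - exists (rev ws); split; first by rewrite all_rev.
      case: (Z2_rev ws) => _ /Z2_to_Pi2; rewrite phi_cat => Hinv.
      apply: (@pe_trans _ _ _ (v ++ (s ++ phi (rev ws)))).
        apply: pe_sym; rewrite -{2}(cats0 v); apply: pe_cat2 (pe_refl _ _) _.
        apply: pe_trans Hinv; exact: pe_cat2 Hws1 (pe_refl _ _).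
      rewrite catA; have := @pe_cat2 _ Pi2_rel _ _ (phi (rev ws)) (phi (rev ws)) Hvs1 (pe_refl _ _).
      by [].
  exists (Wv ++ W); split; first by rewrite all_cat HWv1.
  rewrite phi_cat /=; exact: pe_cat2.
case=> W [HW1 HW2].
have := pe_trans (pe_sym Hfl) HW2 => /part1 /(parity N).
rewrite /= eqxx /=.
have -> : count_mem N W = 0.
  apply/count_memPn; apply/negP => /(allP HW1) /=; by rewrite ltnn.
done.
Qed.

Theorem mainTheorem9 :
  (* phi is well defined and injective on the group <x_i | x_i^2 = 1> *)
  (forall w w' : list nat, Z2free_eq w w' <-> Pi2_eq (phi w) (phi w')) /\
  (* its image consists of units of Pi_2 *)
  (forall w : list nat, Pi2_unit (phi w)) /\
  (* and every unit of Pi_2 lies in the image *)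
  (forall u : list abc, Pi2_unit u -> exists w, Pi2_eq u (phi w)) /\
  (* in particular U(Pi_2) is not finitely generated *)
  ~ (exists S : list (list abc),
        (forall s, List.In s S -> Pi2_unit s) /\
        (forall u, Pi2_unit u -> pres_gen_by Pi2_rel S u)).
Proof.
split; first exact: part1.
split; first exact: part2.
split; first exact: part3.
exact: part4.
Qed.
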